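(* Let $E$ be an ordered normed space and $n\ge1$. Then for every $\mathbf{x}\in E^{\otimes n}$, $\|\mathbf{x}\|_{\pi+,E}=\|\mathbf{x}\|_{\pi,E^+}$; that is, the positive projective norm $\|\cdot\|_{\pi+}$ on $E^{\otimes n}$ coincides with the (ordinary) projective tensor norm of the normed space $E^+$.
   Context: All vector spaces are real. An ordered normed space is a real normed space $E$ together with a closed convex cone $E_+\subseteq E$ (its elements are called positive, written $x\ge0$) such that $E=E_+-E_+$ and such that, writing $\|x\|_+:=\inf\{\|y\|+\|z\|: x=y-z,\ y,z\in E_+\}$, the constant $c_+(E):=\sup\{\|x\|_+:\|x\|\le1\}$ is finite. $E^+$ denotes the vector space $E$ equipped with the norm $\|\cdot\|_+$. $E^{\otimes n}$ is the algebraic $n$-th tensor power of $E$. For a normed space $F$, the projective norm on $F^{\otimes n}$ is $\|\mathbf{x}\|_{\pi,F}:=\inf\{\sum_{k=1}^N|a_k|\,\|x_{1k}\|\cdots\|x_{nk}\| : \mathbf{x}=\sum_{k=1}^N a_k\,x_{1k}\otimes\cdots\otimes x_{nk},\ a_k\in\mathbb{R},\ x_{ik}\in F\}$. The positive projective norm on $E^{\otimes n}$ is $\|\mathbf{x}\|_{\pi+,E}:=\inf\{\sum_{k=1}^N|a_k|\,\|x_{1k}\|\cdots\|x_{nk}\| : \mathbf{x}=\sum_{k=1}^N a_k\,x_{1k}\otimes\cdots\otimes x_{nk},\ a_k\in\mathbb{R},\ x_{ik}\in E_+\}$ (norms $\|\cdot\|$ of $E$). *)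

(* Defs.v *)
From Stdlib Require List.
From HB Require Import structures.
From mathcomp Require Import all_boot all_order all_algebra.
From mathcomp Require Import all_classical all_reals.
From mathcomp Require Import topology normedtype.
Set Implicit Arguments. Unset Strict Implicit. Unset Printing Implicit Defensive.
Import Order.TTheory GRing.Theory Num.Theory.
Local Open Scope ring_scope.
Local Open Scope classical_set_scope.

Definition pos_norm (R : realType) (E : normedModType R) (P : set E) (x : E) : R :=
  inf [set c | exists y z, P y /\ P z /\ x = y - z /\ c = `|y| + `|z|].

Definition ordered_normed_space (R : realType) (E : normedModType R) (P : set E) : Prop :=
  closed P /\
  P 0 /\
  (forall x y, P x -> P y -> P (x + y)) /\
  (forall (a : R) x, 0 <= a -> P x -> P (a *: x)) /\
  (forall x, exists y z, P y /\ P z /\ x = y - z) /\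
  (exists C : R, forall x : E, `|x| <= 1 -> pos_norm P x <= C).

Definition upd (E : Type) (n : nat) (v : 'I_n -> E) (i : 'I_n) (w : E) : 'I_n -> E :=
  fun j => if j == i then w else v j.

Definition multilinear (R : realType) (E : normedModType R) (n : nat)
  (f : ('I_n -> E) -> R) : Prop :=
  forall (v : 'I_n -> E) (i : 'I_n) (a : R) (x y : E),
    f (upd v i (a *: x + y)) = a * f (upd v i x) + f (upd v i y).

(* A formal expression sum_k a_k x_{1k} (x) ... (x) x_{nk}, given as a list of
   pairs (a_k, (x_{ik})_i). *)
Definition tensor_expr (R : realType) (E : normedModType R) (n : nat) :=
  seq (R * ('I_n -> E)).

Definition texpr_eval (R : realType) (E : normedModType R) (n : nat)
  (f : ('I_n -> E) -> R) (s : tensor_expr E n) : R :=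
  \sum_(p <- s) p.1 * f p.2.

(* Two formal expressions denote the same element of the algebraic tensor
   power E^{(x)n} iff they agree on every n-linear form (universal property). *)
Definition tensor_eq (R : realType) (E : normedModType R) (n : nat)
  (s t : tensor_expr E n) : Prop :=
  forall f, multilinear f -> texpr_eval f s = texpr_eval f t.

Definition texpr_cost (R : realType) (E : normedModType R) (n : nat)
  (N : E -> R) (s : tensor_expr E n) : R :=
  \sum_(p <- s) `|p.1| * \prod_(i < n) N (p.2 i).

Definition proj_inf (R : realType) (E : normedModType R) (n : nat)
  (N : E -> R) (Q : set E) (t : tensor_expr E n) : R :=
  inf [set c | exists s : tensor_expr E n,
        tensor_eq s t /\ (forall p, List.In p s -> forall i, Q (p.2 i)) /\
        c = texpr_cost N s].

Definition pos_proj_norm (R : realType) (E : normedModType R) (P : set E) (n : nat)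
  (t : tensor_expr E n) : R :=
  proj_inf (fun x : E => `|x|) P t.

(* projective norm ||t||_{pi,E^+} of the normed space E^+ = (E, ||.||_+) *)
Definition proj_norm_Eplus (R : realType) (E : normedModType R) (P : set E) (n : nat)
  (t : tensor_expr E n) : R :=
  proj_inf (pos_norm P) setT t.

(* Main.v *)
Require Import Defs.
From HB Require Import structures.
From mathcomp Require Import all_boot all_order all_algebra.
From mathcomp Require Import all_classical all_reals.
From mathcomp Require Import topology normedtype ring lra.
Local Open Scope ring_scope.
Local Open Scope classical_set_scope.
Set Implicit Arguments. Unset Strict Implicit. Unset Printing Implicit Defensive.
Import Order.TTheory GRing.Theory Num.Theory.
Lemma pn_ge (R : realType) (E : normedModType R) (P : set E) :
  ordered_normed_space P -> forall x, `|x| <= pos_norm P x.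
Proof.
move=> [_ [_ [_ [_ [hd _]]]]] x.
apply: lb_le_inf.
  have [y [z [Py [Pz ->]]]] := hd x.
  by exists (`|y| + `|z|); exists y, z.
move=> c [y [z [_ [_ [-> ->]]]]]; exact: ler_normB.
Qed.

Lemma pn_le (R : realType) (E : normedModType R) (P : set E) :
  ordered_normed_space P -> forall x, P x -> pos_norm P x <= `|x|.
Proof.
move=> [_ [P0 _]] x Px.
have -> : `|x| = `|x| + `|0 : E| by rewrite normr0 addr0.
apply: ge_inf.
  exists 0 => c [y [z [_ [_ [_ ->]]]]]; exact: addr_ge0.
by exists x, 0; rewrite subr0.
Qed.

Lemma pn_dec (R : realType) (E : normedModType R) (P : set E) (lam : R) :
  ordered_normed_space P -> 1 < lam -> forall x, exists yz : E * E,
  P yz.1 /\ P yz.2 /\ x = yz.1 - yz.2 /\ `|yz.1| + `|yz.2| <= lam * pos_norm P x.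
Proof.
move=> hE hl x.
have [P0 hd] : P 0 /\ (forall x, exists y z, P y /\ P z /\ x = y - z).
  by case: hE => [_ [? [_ [_ [? _]]]]].
have [->|x0] := eqVneq x 0.
  exists (0, 0); do 3! split => //=; first by rewrite subr0.
  by rewrite normr0 addr0 mulr_ge0 // ?(le_trans _ (pn_ge hE 0)) ?normr0 // ltW // (lt_trans ltr01).
have pp : 0 < pos_norm P x by apply: lt_le_trans (pn_ge hE x); rewrite normr_gt0.
have : inf [set c | exists y z, P y /\ P z /\ x = y - z /\ c = `|y| + `|z|] < lam * pos_norm P x.
  rewrite -/(pos_norm P x) -subr_gt0.
  have -> : lam * pos_norm P x - pos_norm P x = (lam - 1) * pos_norm P x by rewrite mulrBl mul1r.
  by rewrite mulr_gt0 // subr_gt0.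
case/inf_lt.
  have [y [z [Py [Pz ->]]]] := hd x.
  by exists (`|y| + `|z|); exists y, z.
move=> c [y [z [Py [Pz [-> ->]]]]] lt.
by exists (y, z); do 3! split => //; apply: ltW.
Qed.
Fixpoint splitE (R : realType) (E : normedModType R) (n : nat) (Y Z : E -> E)
  (i : 'I_n) (s : tensor_expr E n) : tensor_expr E n :=
  match s with
  | [::] => [::]
  | p :: s' => (p.1, upd p.2 i (Y (p.2 i))) :: (- p.1, upd p.2 i (Z (p.2 i)))
                 :: splitE Y Z i s'
  end.

Lemma upd_id (E : Type) (n : nat) (v : 'I_n -> E) i : upd v i (v i) = v.
Proof. by apply: funext => j; rewrite /upd; case: eqVneq => // ->. Qed.

Lemma upd_neq (E : Type) (n : nat) (v : 'I_n -> E) i w j : j != i -> upd v i w j = v j.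
Proof. by rewrite /upd => /negbTE ->. Qed.

Lemma upd_eq (E : Type) (n : nat) (v : 'I_n -> E) i w : upd v i w i = w.
Proof. by rewrite /upd eqxx. Qed.

Lemma splitE_eval (R : realType) (E : normedModType R) (n : nat) (Y Z : E -> E) i
  (f : ('I_n -> E) -> R) s :
  (forall x, x = Y x - Z x) -> multilinear f ->
  texpr_eval f (splitE Y Z i s) = texpr_eval f s.
Proof.
move=> hYZ hf; elim: s => [//|p s IH] /=.
rewrite /texpr_eval !big_cons /= -/(texpr_eval f _) IH addrA; congr (_ + _).
have -> : f p.2 = f (upd p.2 i ((-1) *: Z (p.2 i) + Y (p.2 i))).
  by rewrite scaleN1r addrC -hYZ upd_id.
by rewrite hf; ring.
Qed.

Lemma splitE_in (R : realType) (E : normedModType R) (n : nat) (Y Z : E -> E) i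
  (P : set E) (l : seq 'I_n) s :
  (forall x, P (Y x)) -> (forall x, P (Z x)) ->
  (forall p, List.In p s -> forall j, j \in l -> P (p.2 j)) ->
  (forall p, List.In p (splitE Y Z i s) -> forall j, j \in i :: l -> P (p.2 j)).
Proof.
move=> hY hZ; elim: s => [//|q s IH] H p /=.
have key : forall w, P w -> (forall j, j \in i :: l -> P (upd q.2 i w j)).
  move=> w Pw j; rewrite in_cons; case: eqVneq => [->|ne] /=; first by rewrite upd_eq.
  by move=> jl; rewrite upd_neq //; apply: H => //; left.
case=> [<- /=|[<- /=|]]; [exact: key| exact: key|].
by apply: IH => p' hp'; apply: H; right.
Qed.

Definition costl (R : realType) (E : normedModType R) (P : set E) (n : nat)
  (l : seq 'I_n) (s : tensor_expr E n) : R :=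
  \sum_(p <- s) `|p.1| * \prod_(j < n) (if j \in l then `|p.2 j| else pos_norm P (p.2 j)).

Lemma splitE_cost (R : realType) (E : normedModType R) (P : set E) (n : nat)
  (Y Z : E -> E) (lam : R) (i : 'I_n) (l : seq 'I_n) (s : tensor_expr E n) :
  ordered_normed_space P -> i \notin l ->
  (forall x, `|Y x| + `|Z x| <= lam * pos_norm P x) ->
  costl P (i :: l) (splitE Y Z i s) <= lam * costl P l s.
Proof.
move=> hE il hYZ; elim: s => [|p s IH] /=; first by rewrite /costl !big_nil mulr0.
rewrite /costl !big_cons /= -/(costl P (i :: l) (splitE Y Z i s)) -/(costl P l s) mulrDr addrA; apply: lerD => //.
set G := fun j => if j \in l then `|p.2 j| else pos_norm P (p.2 j).
have Gge : forall j, 0 <= G j.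
  move=> j; rewrite /G; case: ifP => _ //; exact: le_trans (pn_ge hE _).
have hw : forall w, \prod_(j < n) (if j \in i :: l then `|upd p.2 i w j|
      else pos_norm P (upd p.2 i w j)) = `|w| * \prod_(j < n | j != i) G j.
  move=> w; rewrite (bigD1 i) //= in_cons eqxx /= upd_eq; congr (_ * _).
  apply: eq_bigr => j ji; rewrite in_cons (negbTE ji) /= upd_neq //.
have eG : \prod_(j < n) (if j \in l then `|p.2 j| else pos_norm P (p.2 j)) = G i * \prod_(j < n | j != i) G j by rewrite (bigD1 i).
have hGi : G i = pos_norm P (p.2 i) by rewrite /G (negbTE il).
rewrite !hw eG hGi normrN.
set Q := \prod_(j < n | j != i) G j.
have Q0 : 0 <= Q by apply: prodr_ge0.
rewrite -mulrDr -mulrDl [lam * _]mulrCA; apply: ler_wpM2l => //.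
rewrite mulrA; apply: ler_wpM2r => //.
Qed.
Definition fullsplit (R : realType) (E : normedModType R) (n : nat) (Y Z : E -> E)
  (l : seq 'I_n) (s : tensor_expr E n) : tensor_expr E n :=
  foldr (fun i acc => splitE Y Z i acc) s l.

Lemma full_eval (R : realType) (E : normedModType R) (n : nat) (Y Z : E -> E)
  (l : seq 'I_n) (s : tensor_expr E n) f :
  (forall x, x = Y x - Z x) -> multilinear f ->
  texpr_eval f (fullsplit Y Z l s) = texpr_eval f s.
Proof.
move=> hYZ hf; elim: l => [//|i l IH] /=.
by rewrite splitE_eval.
Qed.

Lemma full_in (R : realType) (E : normedModType R) (n : nat) (Y Z : E -> E)
  (P : set E) (l : seq 'I_n) (s : tensor_expr E n) :
  (forall x, P (Y x)) -> (forall x, P (Z x)) ->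
  forall p, List.In p (fullsplit Y Z l s) -> forall j, j \in l -> P (p.2 j).
Proof.
move=> hY hZ; elim: l => [//|i l IH] /=.
exact: splitE_in.
Qed.

Lemma full_cost (R : realType) (E : normedModType R) (P : set E) (n : nat)
  (Y Z : E -> E) (lam : R) (l : seq 'I_n) (s : tensor_expr E n) :
  ordered_normed_space P -> uniq l -> 0 <= lam ->
  (forall x, `|Y x| + `|Z x| <= lam * pos_norm P x) ->
  costl P l (fullsplit Y Z l s) <= lam ^+ size l * costl P [::] s.
Proof.
move=> hE + l0 hYZ; elim: l => [|i l IH] /=; first by rewrite expr0 mul1r.
case/andP=> il ul.
apply: le_trans (splitE_cost _ hE il hYZ) _.
by rewrite exprS -mulrA; apply: ler_wpM2l => //; apply: IH.
Qed.

Lemma key_split (R : realType) (E : normedModType R) (P : set E) (n : nat)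
  (lam : R) (s : tensor_expr E n) :
  ordered_normed_space P -> 1 < lam ->
  exists s' : tensor_expr E n, tensor_eq s' s /\
    (forall p, List.In p s' -> forall i, P (p.2 i)) /\
    texpr_cost (fun x : E => `|x|) s' <= lam ^+ n * texpr_cost (pos_norm P) s.
Proof.
move=> hE hl.
have [f hf] := choice (pn_dec hE hl).
exists (fullsplit (fun x => (f x).1) (fun x => (f x).2) (enum 'I_n) s).
split; first by move=> g hg; apply: full_eval => // x; case: (hf x) => _ [_ []].
split.
  move=> p hp i; apply: (full_in (l := enum 'I_n) _ _ hp); rewrite ?mem_enum //.
    by move=> x; case: (hf x).
  by move=> x; case: (hf x) => _ [].
have e1 : forall s', texpr_cost (fun x : E => `|x|) s' = costl P (enum 'I_n) s'.
  move=> s'; apply: eq_bigr => p _; congr (_ * _); apply: eq_bigr => j _.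
  by rewrite mem_enum.
have e2 : texpr_cost (pos_norm P) s = costl P [::] s.
  by apply: eq_bigr => p _; congr (_ * _); apply: eq_bigr => j _; rewrite in_nil.
rewrite e1 e2.
have := @full_cost R E P n (fun x => (f x).1) (fun x => (f x).2) lam (enum 'I_n) s hE.
rewrite size_enum_ord; apply.
- exact: enum_uniq.
- exact: ltW (lt_trans ltr01 hl).
- by move=> x; case: (hf x) => _ [_ [_ ]].
Qed.

Lemma pow_bound (R : realType) (n : nat) (eta : R) :
  0 <= eta -> eta <= 1 -> (1 + eta) ^+ n <= 1 + (2 ^+ n - 1) * eta.
Proof.
move=> h0 h1; elim: n => [|n IH]; first by rewrite !expr0 subrr mul0r addr0.
rewrite exprS exprS.
have h2 : 1 <= (2 : R) ^+ n by rewrite exprn_ege1 // ler1n.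
have h3 : 0 <= (1 + eta) ^+ n by rewrite exprn_ge0 // addr_ge0.
set a := (1 + eta) ^+ n in IH h3 *; set b := (2 : R) ^+ n in h2 IH *.
have h4 : (1 + eta) * a <= (1 + eta) * (1 + (b - 1) * eta).
  by apply: ler_wpM2l => //; lra.
have h5 : (b - 1) * (eta * eta) <= (b - 1) * eta.
  apply: ler_wpM2l; first lra.
  nra.
have -> : 2 * b = b + b by ring.
nra.
Qed.
Lemma cost_ge0 (R : realType) (E : normedModType R) (n : nat) (N : E -> R)
  (s : tensor_expr E n) : (forall x, 0 <= N x) -> 0 <= texpr_cost N s.
Proof.
move=> hN; apply: sumr_ge0 => p _; apply: mulr_ge0 => //.
by apply: prodr_ge0 => j _.
Qed.

Lemma cost_le (R : realType) (E : normedModType R) (P : set E) (n : nat)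
  (s : tensor_expr E n) : ordered_normed_space P ->
  (forall p, List.In p s -> forall i, P (p.2 i)) ->
  texpr_cost (pos_norm P) s <= texpr_cost (fun x : E => `|x|) s.
Proof.
move=> hE; elim: s => [|p s IH] H; first by rewrite /texpr_cost !big_nil.
rewrite /texpr_cost !big_cons; apply: lerD; last first.
  by apply: IH => q hq; apply: H; right.
apply: ler_wpM2l => //; apply: ler_prod => j _.
rewrite (le_trans _ (pn_ge hE _)) //=.
by apply: pn_le => //; apply: H; left.
Qed.

Unset Implicit Arguments.
Theorem lemma4p4 (R : realType) (E : normedModType R) (P : set E) (n : nat)
  (hE : ordered_normed_space P) (hn : (1 <= n)%N) (t : tensor_expr E n) :
  pos_proj_norm P t = proj_norm_Eplus P t.
Proof.
rewrite /pos_proj_norm /proj_norm_Eplus /proj_inf.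
set A := [set c | _]; set B := [set c | _].
have pn0 : forall x, 0 <= pos_norm P x by move=> x; exact: le_trans (pn_ge hE x).
have Alb : has_lbound A.
  by exists 0 => c [s [_ [_ ->]]]; apply: cost_ge0.
have Blb : has_lbound B.
  by exists 0 => c [s [_ [_ ->]]]; apply: cost_ge0.
have Bne : B !=set0 by exists (texpr_cost (pos_norm P) t); exists t.
have Ane : A !=set0.
  have [s' [h1 [h2 _]]] := @key_split R E P n 2 t hE ltac:(lra).
  by exists (texpr_cost (fun x : E => `|x|) s'); exists s'.
apply/eqP; rewrite eq_le; apply/andP; split; last first.
  apply: lb_le_inf => // c [s [h1 [h2 ->]]].
  apply: le_trans (cost_le hE h2).
  by apply: ge_inf => //; exists s.
apply: lb_le_inf => // c [s [h1 [_ ->]]].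
set c0 := texpr_cost (pos_norm P) s.
have c00 : 0 <= c0 by apply: cost_ge0.
apply/ler_addgt0Pr => e e0.
set K := 2 ^+ n * c0 + 1.
have K0 : 0 < K by rewrite /K ltr_pwDr // mulr_ge0 // exprn_ge0.
set eta := e / (K + e).
have heta : eta * (K + e) = e by rewrite /eta divfK // gt_eqF // addr_gt0.
have eta0 : 0 < eta by rewrite /eta divr_gt0 // addr_gt0.
have eta1 : eta <= 1 by nra.
have [s' [h1' [h2' h3']]] := @key_split R E P n (1 + eta) s hE ltac:(lra).
apply: (@le_trans _ _ (texpr_cost (fun x : E => `|x|) s')).
  apply: ge_inf => //.
  by exists s'; split => //; move=> f hf; rewrite h1' // h1.
apply: le_trans h3' _.
have hp := pow_bound n (ltW eta0) eta1.
have h2n : 1 <= (2 : R) ^+ n by rewrite exprn_ege1 // ler1n.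
have : (1 + eta) ^+ n * c0 <= (1 + (2 ^+ n - 1) * eta) * c0 by apply: ler_wpM2r.
clearbody eta; rewrite /K in heta K0.
move: hp h2n heta K0; set a := (1 + eta) ^+ n; set b := (2 : R) ^+ n => hp h2n heta K0 ha.
rewrite -/c0.
have q1 : 0 <= eta * c0 by apply: mulr_ge0 => //; lra.
have q2 : 0 <= eta * e by apply: mulr_ge0; lra.
clearbody a b.
nra.
Qed.
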